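(* Let $(\omega,c)\in\mathbb{R}^2$ satisfy: $\omega>c^2/4$, or $\omega=c^2/4$ and $c>0$. Write $c=2s\sqrt\omega$ with $s\in(-1,1]$, and let $\beta_0=\frac13(2s+\sqrt{3+s^2})$, $\beta_1=1+s$. Then the function $(\beta_0,\beta_1)\ni\eta\mapsto k(\eta)\in(0,1)$ is strictly increasing, where $$k(\eta)^2=\frac{3\eta^2+(\sqrt{f_s(\eta)}-6s)\eta+2(s^2-1)}{2\eta\sqrt{f_s(\eta)}},\qquad f_s(\eta)=-3\eta^2+4s\eta+4.$$
   Context: Equivalently, with $\eta_3=4\sqrt\omega\,\eta\in(\alpha_0,\alpha_1)$, $\alpha_0=\tfrac13(4c+\sqrt{48\omega+4c^2})$, $\alpha_1=4\sqrt\omega+2c$, $A(x)=-3x^2+8cx+64\omega$, $\eta_1=\frac{-\eta_3+4c-\sqrt{A(\eta_3)}}{2}$, $\eta_2=\frac{-\eta_3+4c+\sqrt{A(\eta_3)}}{2}$, one has $k^2=\frac{-\eta_1(\eta_3-\eta_2)}{\eta_3(\eta_2-\eta_1)}$, the elliptic modulus of the periodic solution; $f_s(\eta)>0$ on $(\beta_0,\beta_1)$. *)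

(* Defs.v *)
From mathcomp Require Import all_boot all_order all_algebra.
From mathcomp Require Import reals.
Set Implicit Arguments. Unset Strict Implicit. Unset Printing Implicit Defensive.
Import Order.TTheory GRing.Theory Num.Theory.
Local Open Scope ring_scope.

Section Defs.
Variable R : realType.

Definition fs (s eta : R) : R := - 3 * eta ^+ 2 + 4 * s * eta + 4.

Definition beta0 (s : R) : R := (2 * s + Num.sqrt (3 + s ^+ 2)) / 3.
Definition beta1 (s : R) : R := 1 + s.

Definition ksq (s eta : R) : R :=
  (3 * eta ^+ 2 + (Num.sqrt (fs s eta) - 6 * s) * eta + 2 * (s ^+ 2 - 1))
  / (2 * eta * Num.sqrt (fs s eta)).

Definition kmod (s eta : R) : R := Num.sqrt (ksq s eta).

End Defs.

(* Main.v *)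
Require Import Defs.
From mathcomp Require Import all_boot all_order all_algebra.
From mathcomp Require Import reals ring lra.
Import Order.TTheory GRing.Theory Num.Theory.
Local Open Scope ring_scope.

Section S.
Variable R : realType.

Lemma dom_facts (s eta : R) : -1 < s <= 1 -> beta0 s < eta < beta1 s ->
  [/\ 0 < eta, 0 < 3*eta - 2*s, 0 < 3*eta^+2 - 4*s*eta + s^+2 - 1,
      (5*s+3)/6 < eta & eta < 1 + s].
Proof.
move=> /andP[s1 s2] /andP[h1 h2]; move: h1 h2; rewrite /beta0 /beta1.
set q := Num.sqrt _.
have q0 : 0 <= q by apply: sqrtr_ge0.
have q2 : q ^+ 2 = 3 + s ^+ 2 by rewrite sqr_sqrtr // addr_ge0 // sqr_ge0.
have q3 : (3 + s) / 2 <= q by nra.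
have q4 : 0 < q + 2 * s by nra.
move=> h1 h2.
split; try nra.
Qed.

Lemma pt_facts (s eta : R) : -1 < s <= 1 -> beta0 s < eta < beta1 s ->
  let r := Num.sqrt (fs s eta) in
  [/\ 0 < r, r ^+ 2 = fs s eta, 0 < eta - 2 * s + r, 0 < 3 * eta - 2 * s - r &
     [/\ 0 < 2 * s + r - eta, 0 < 1 + s^+2 - s * eta & 0 < 2 + s * (eta + r)]].
Proof.
move=> hs he r; have [e0 e1 e2 e3 e4] := dom_facts _ _ hs he.
case/andP: hs => s1 s2.
have f0 : 0 < fs s eta by rewrite /fs; nra.
have r0 : 0 < r by rewrite sqrtr_gt0.
have r2 : r ^+ 2 = fs s eta by rewrite sqr_sqrtr // ltW.
move: r2; rewrite /fs => r2.
have hA : r ^+ 2 - (2 * s - eta) ^+ 2 = 4 * (1 - (eta - s) ^+ 2) by rewrite r2; ring.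
have hB : (3 * eta - 2 * s) ^+ 2 - r ^+ 2 = 4 * (3*eta^+2 - 4*s*eta + s^+2 - 1) by rewrite r2; ring.
have p1 : 0 < 1 + s^+2 - s * eta.
  have [sp|sn] := leP 0 s; nra.
have p2 : 0 < 2 + s * (eta + r).
  have [sp|sn] := leP 0 s; first nra.
  have i1 : 0 < 1 + s * eta by nra.
  have i2 : 0 < 1 - s ^+ 2 by nra.
  have h : 0 < (2 + s * eta) ^+ 2 - s ^+ 2 * r ^+ 2.
    have -> : (2 + s * eta) ^+ 2 - s ^+ 2 * r ^+ 2 = 4 * ((1 - s^+2) * (1 + s * eta) + s^+2 * eta^+2) by rewrite r2; ring.
    have : 0 < (1 - s^+2) * (1 + s * eta) by apply: mulr_gt0.
    nra.
  nra.
have sA : 0 < r - (2 * s - eta) by nra.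
have sC : 0 < r - (eta - 2 * s) by nra.
have sB : 0 < 3 * eta - 2 * s - r by nra.
split => //; try lra.
split => //; lra.
Qed.

Lemma ksq_bounds (s eta : R) : -1 < s <= 1 -> beta0 s < eta < beta1 s ->
  0 < ksq s eta < 1.
Proof.
move=> hs he; have [e0 e1 e2 e3 e4] := dom_facts _ _ hs he.
have [r0 r2 hA hB [hC p1 p2]] := pt_facts _ _ hs he.
move: r0 r2 hA hB hC p1 p2; rewrite /ksq; set r := Num.sqrt _ => r0 r2 hA hB hC p1 p2.
move: r2; rewrite /fs => r2.
have D0 : 0 < 2 * eta * r by nra.
have EN : 2 * (3 * eta ^+ 2 + (r - 6 * s) * eta + 2 * (s ^+ 2 - 1)) =
   (eta - 2 * s + r) * (3 * eta - 2 * s - r).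
  have E : 2 * (3 * eta ^+ 2 + (r - 6 * s) * eta + 2 * (s ^+ 2 - 1)) -
   (eta - 2 * s + r) * (3 * eta - 2 * s - r) = r ^+ 2 - (- 3 * eta ^+ 2 + 4 * s * eta + 4) by ring.
  by apply/eqP; rewrite -subr_eq0 E r2 subrr.
have EM : 4 * eta * r - 2 * (3 * eta ^+ 2 + (r - 6 * s) * eta + 2 * (s ^+ 2 - 1)) =
   (2 * s + r - eta) * (3 * eta - 2 * s + r).
  have E : 4 * eta * r - 2 * (3 * eta ^+ 2 + (r - 6 * s) * eta + 2 * (s ^+ 2 - 1)) -
   (2 * s + r - eta) * (3 * eta - 2 * s + r) = - (r ^+ 2 - (- 3 * eta ^+ 2 + 4 * s * eta + 4)) by ring.
  by apply/eqP; rewrite -subr_eq0 E r2 subrr oppr0.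
have P1 : 0 < (eta - 2 * s + r) * (3 * eta - 2 * s - r) by apply: mulr_gt0.
have P2 : 0 < (2 * s + r - eta) * (3 * eta - 2 * s + r) by apply: mulr_gt0 => //; lra.
apply/andP; split.
  by apply: divr_gt0 => //; lra.
by rewrite ltr_pdivrMr // mul1r; lra.
Qed.


Lemma Z_pos (s a b : R) : -1 < s <= 1 -> (5*s+3)/6 < a -> a < b -> b < 1 + s ->
  0 < 1 + s^+2 - s * b ->
  0 < 8 * (1 + s^+2 - s * b) - 3 * (b - a) * (b - 2 * s).
Proof.
move=> /andP[s1 s2] ha hab hb p1.
have [h|h] := leP b (2 * s); first nra.
have h1 : (b - a) * (b - 2 * s) <= (b - (5*s+3)/6) * (b - 2 * s) by nra.
nra.
Qed.

Lemma ksq_mono (s a b : R) : -1 < s <= 1 -> beta0 s < a < beta1 s ->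
  beta0 s < b < beta1 s -> a < b -> ksq s a < ksq s b.
Proof.
move=> hs ha hb hab.
have [a0 a1 a2 a3 a4] := dom_facts _ _ hs ha.
have [b0 b1 b2 b3 b4] := dom_facts _ _ hs hb.
have [ra0 ra2 hAa hBa [hCa p1a p2a]] := pt_facts _ _ hs ha.
have [rb0 rb2 hAb hBb [hCb p1b p2b]] := pt_facts _ _ hs hb.
have Z := Z_pos _ _ _ hs a3 hab b4 p1b.
move: ra0 ra2 hAa hBa hCa p1a p2a rb0 rb2 hAb hBb hCb p1b p2b.
rewrite /ksq.
set ra := Num.sqrt (fs s a). set rb := Num.sqrt (fs s b).
move=> ra0 ra2 hAa hBa hCa p1a p2a rb0 rb2 hAb hBb hCb p1b p2b.
rewrite /fs in ra2 rb2.
case/andP: hs => s1 s2.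
have rab : rb <= ra.
  apply: ler_wsqrtr; rewrite /fs.
  have : 0 <= (b - a) * (3 * (a + b) - 4 * s) by apply: mulr_ge0; lra.
  lra.
have Y0 : 0 < 4 + 3 * a * b - 6 * s * (a + b) + 8 * s ^+ 2 + ra * rb.
  have : rb * rb <= ra * rb by apply: ler_wpM2r => //; apply: ltW.
  have : rb * rb = rb ^+ 2 by rewrite expr2.
  lra.
have X0 : 0 < (b - 2 * s) * ra - (a - 2 * s) * rb.
  have E : ((b - 2 * s) * ra - (a - 2 * s) * rb) * (ra + rb) - (b - a) * (4 + 3 * a * b - 6 * s * (a + b) + 8 * s ^+ 2 + ra * rb)
    = (b - 2 * s) * (ra ^+ 2 - (- 3 * a ^+ 2 + 4 * s * a + 4)) - (a - 2 * s) * (rb ^+ 2 - (- 3 * b ^+ 2 + 4 * s * b + 4)) by ring.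
  rewrite ra2 rb2 !subrr !mulr0 subr0 in E.
  have : 0 < ((b - 2 * s) * ra - (a - 2 * s) * rb) * (ra + rb).
    have : 0 < (b - a) * (4 + 3 * a * b - 6 * s * (a + b) + 8 * s ^+ 2 + ra * rb) by apply: mulr_gt0 => //; lra.
    lra.
  rewrite pmulr_lgt0 //; lra.
have V0 : 0 < 2 * s * (b - a) + b * ra - a * rb.
  have E : (2 * s * (b - a) + b * ra - a * rb) * (b * ra + a * rb) - (b - a) * (b * (4 + 2 * s * a + 2 * s * ra) + a * (4 + 2 * s * b + 2 * s * rb))
    = b ^+ 2 * (ra ^+ 2 - (- 3 * a ^+ 2 + 4 * s * a + 4)) - a ^+ 2 * (rb ^+ 2 - (- 3 * b ^+ 2 + 4 * s * b + 4)) by ring.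
  rewrite ra2 rb2 !subrr !mulr0 subr0 in E.
  have : 0 < (2 * s * (b - a) + b * ra - a * rb) * (b * ra + a * rb).
    have : 0 < (b - a) * (b * (4 + 2 * s * a + 2 * s * ra) + a * (4 + 2 * s * b + 2 * s * rb)).
      apply: mulr_gt0; first lra.
      apply: addr_gt0; apply: mulr_gt0 => //; lra.
    lra.
  rewrite pmulr_lgt0 //; apply: addr_gt0; apply: mulr_gt0 => //.
have ENa : 2 * (3 * a ^+ 2 + (ra - 6 * s) * a + 2 * (s ^+ 2 - 1)) =
   (a - 2 * s + ra) * (3 * a - 2 * s - ra).
  have E : 2 * (3 * a ^+ 2 + (ra - 6 * s) * a + 2 * (s ^+ 2 - 1)) -
   (a - 2 * s + ra) * (3 * a - 2 * s - ra) = ra ^+ 2 - (- 3 * a ^+ 2 + 4 * s * a + 4) by ring.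
  by apply/eqP; rewrite -subr_eq0 E ra2 subrr.
have ENb : 2 * (3 * b ^+ 2 + (rb - 6 * s) * b + 2 * (s ^+ 2 - 1)) =
   (b - 2 * s + rb) * (3 * b - 2 * s - rb).
  have E : 2 * (3 * b ^+ 2 + (rb - 6 * s) * b + 2 * (s ^+ 2 - 1)) -
   (b - 2 * s + rb) * (3 * b - 2 * s - rb) = rb ^+ 2 - (- 3 * b ^+ 2 + 4 * s * b + 4) by ring.
  by apply/eqP; rewrite -subr_eq0 E rb2 subrr.
have Da : 0 < 2 * a * ra by rewrite mulr_gt0 // mulr_gt0.
have Db : 0 < 2 * b * rb by rewrite mulr_gt0 // mulr_gt0.
rewrite ltr_pdivrMr // mulrAC ltr_pdivlMr //.
have L1 : (a - 2 * s + ra) * rb < (b - 2 * s + rb) * ra by lra.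
have L2 : (3 * a - 2 * s - ra) * b < (3 * b - 2 * s - rb) * a by lra.
have L3 : ((a - 2 * s + ra) * rb) * ((3 * a - 2 * s - ra) * b) < ((b - 2 * s + rb) * ra) * ((3 * b - 2 * s - rb) * a).
  apply: ltr_pM => //; apply: ltW; apply: mulr_gt0 => //.
have e1 : 2 * ((3 * a ^+ 2 + (ra - 6 * s) * a + 2 * (s ^+ 2 - 1)) * (2 * b * rb)) = 2 * (b * rb) * ((a - 2 * s + ra) * (3 * a - 2 * s - ra)) by rewrite -ENa; ring.
have e2 : 2 * ((3 * b ^+ 2 + (rb - 6 * s) * b + 2 * (s ^+ 2 - 1)) * (2 * a * ra)) = 2 * (a * ra) * ((b - 2 * s + rb) * (3 * b - 2 * s - rb)) by rewrite -ENb; ring.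
have e3 : ((a - 2 * s + ra) * rb) * ((3 * a - 2 * s - ra) * b) = (b * rb) * ((a - 2 * s + ra) * (3 * a - 2 * s - ra)) by ring.
have e4 : ((b - 2 * s + rb) * ra) * ((3 * b - 2 * s - rb) * a) = (a * ra) * ((b - 2 * s + rb) * (3 * b - 2 * s - rb)) by ring.
lra.
Qed.

End S.

Lemma s_range (R : realType) (omega c : R) :
  (c ^+ 2 / 4 < omega \/ (omega = c ^+ 2 / 4 /\ 0 < c)) ->
  -1 < c / (2 * Num.sqrt omega) <= 1.
Proof.
case=> [h|[-> c0]].
  have w0 : 0 < omega by apply: le_lt_trans h; apply: divr_ge0 => //; apply: sqr_ge0.
  have q0 : 0 < Num.sqrt omega by rewrite sqrtr_gt0.
  have q2 : Num.sqrt omega ^+ 2 = omega by rewrite sqr_sqrtr // ltW.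
  have d0 : 0 < 2 * Num.sqrt omega by rewrite mulr_gt0.
  have h2 : c ^+ 2 < (2 * Num.sqrt omega) ^+ 2 by rewrite exprMn q2; lra.
  apply/andP; split.
    rewrite ltr_pdivlMr //; nra.
  rewrite ler_pdivrMr //; nra.
have -> : c ^+ 2 / 4 = (c / 2) ^+ 2 by field.
rewrite sqrtr_sqr ger0_norm; last lra.
have -> : c / (2 * (c / 2)) = 1.
  rewrite [2 * _]mulrC -mulrA mulVf ?mulr1 ?divff //; lra.
apply/andP; split; lra.
Qed.

Theorem proposition3p5 (R : realType) (omega c : R) :
  (c ^+ 2 / 4 < omega \/ (omega = c ^+ 2 / 4 /\ 0 < c)) ->
  let s := c / (2 * Num.sqrt omega) in
  (forall eta : R, beta0 s < eta < beta1 s ->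
     0 < kmod s eta < 1) /\
  (forall eta1 eta2 : R,
     beta0 s < eta1 < beta1 s -> beta0 s < eta2 < beta1 s ->
     eta1 < eta2 -> kmod s eta1 < kmod s eta2).
Proof.
move=> H s; have hs : -1 < s <= 1 by apply: s_range.
split.
  move=> eta he; have /andP[k0 k1] := ksq_bounds _ _ _ hs he.
  rewrite /kmod sqrtr_gt0 k0 /= -sqrtr1 ltr_sqrt //; lra.
move=> a b ha hb hab; rewrite /kmod ltr_sqrt.
  exact: ksq_mono.
by have /andP[] := ksq_bounds _ _ _ hs hb.
Qed.
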